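(* Let $(L,\le,\bot,\top)$ be a complete lattice and $(\&_i,\swarrow^i,\nwarrow_i)$, $i=1,\dots,n$, adjoint triples on $L$ with $x\,\&_i\,\top=\top\,\&_i\,x=x$ for all $x\in L$ and all $i$. Let $(A,B,R,\sigma)$ be a normalized context whose concept lattice $\mathcal{M}$ satisfies the ascending chain condition. If the context has a decomposition into independent subcontexts, then $\mathcal{M}$ has a decomposition into independent blocks. Specifically, if $\{(A_\lambda,B_\lambda,R_\lambda,\sigma_\lambda)\mid\lambda\in\Lambda\}$ is a decomposition into independent subcontexts, then the family $\{K_\lambda\}_{\lambda\in\Lambda}$ with $$K_\lambda=\{\langle g,f\rangle\in\mathcal{M}\mid\langle g,f\rangle=\textstyle\bigwedge M_g^{A_\lambda}\}\cup\{\langle g_\top,f_\bot\rangle,\langle g_\bot,f_\top\rangle\}$$ is a decomposition of $\mathcal{M}$ into independent blocks.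
   Context: An adjoint triple on $L$ is a triple of maps $\&,\swarrow,\nwarrow\colon L\times L\to L$ with $x\le z\swarrow y\iff x\& y\le z\iff y\le z\nwarrow x$. A context is $(A,B,R,\sigma)$ with $A,B$ non-empty, $R\colon A\times B\to L$, $\sigma\colon A\times B\to\{1,\dots,n\}$; normalized means every $a\in A$ has $b_1,b_2$ with $R(a,b_1)\ne\bot$, $R(a,b_2)=\bot$, and every $b\in B$ has $a_1,a_2$ with $R(a_1,b)\ne\bot$, $R(a_2,b)=\bot$. For $g\colon B\to L$, $f\colon A\to L$: $g^\uparrow(a)=\inf_{b}R(a,b)\swarrow^{\sigma(a,b)}g(b)$, $f^\downarrow(b)=\inf_{a}R(a,b)\nwarrow_{\sigma(a,b)}f(a)$. $\mathcal{M}$ is the complete lattice of pairs $\langle g,f\rangle$ with $g^\uparrow=f$, $f^\downarrow=g$, ordered by $g_1\le g_2$ pointwise; top $\langle g_\top,f_\bot\rangle$, bottom $\langle g_\bot,f_\top\rangle$ ($g_\top,g_\bot,f_\top,f_\bot$ constant maps). $\phi_{a,x}\colon A\to L$ takes value $x$ at $a$ and $\bot$ elsewhere. Meet-irreducible concepts (elements $c\ne$ top with $c=d\wedge e\Rightarrow c\in\{d,e\}$) all have the form $\langle\phi_{a,x}^\downarrow,\phi_{a,x}^{\downarrow\uparrow}\rangle$. For $A'\subseteq A$, $M_F^{A'}$ is the set of meet-irreducible concepts equal to $\langle\phi_{a,x}^\downarrow,\phi_{a,x}^{\downarrow\uparrow}\rangle$ for some $a\in A'$, $x\in L$, and $M_g^{A'}=\{c\in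 M_F^{A'}\mid\langle g,f\rangle\preceq c\}$. Separable subcontext: $(Y,X,R_{Y\times X},\sigma_{Y\times X})$ with $Y\subsetneq A$, $X\subsetneq B$ non-empty, some $R(a,b)\ne\bot$ with $a\in Y,b\in X$, $R=\bot$ on $Y\times(B\setminus X)$ and on $(A\setminus Y)\times X$. $\&$ has zero-divisors if $x\&y=\bot$ for some $x,y\ne\bot$. Decomposition into independent subcontexts: non-empty $\Lambda$, each $(A_\lambda,B_\lambda,R_\lambda,\sigma_\lambda)$ (restrictions) separable, $\{A_\lambda\}$ partitions $A$, $\{B_\lambda\}$ partitions $B$, and $\&_{\sigma(a,b)}$ has no zero-divisors whenever $(a,b)\in((A\setminus A_\lambda)\times B_\lambda)\cup(A_\lambda\times(B\setminus B_\lambda))$ for some $\lambda$. For a bounded lattice $(M,\preceq,\bot,\top)$, a block is a sublattice $K\subsetneq M$ with $K\setminus\{\bot,\top\}\ne\varnothing$ and $(\{x\mid k\preceq x\}\cup\{x\mid x\preceq k\})\setminus\{\bot,\top\}\subseteq K$ for all $k\in K\setminus\{\bot,\top\}$. Blocks $K_1,K_2$ are independent if $K_1\cap K_2\subseteq\{\bot,\top\}$. $M$ has a decomposition into independent blocks if there is a family of pairwise independent blocks whose union is $M$. *)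

(* Defs.v *)
From mathcomp Require Import ssreflect ssrfun ssrbool eqtype ssrnat fintype.

Set Implicit Arguments.
Unset Strict Implicit.
Unset Printing Implicit Defensive.

Record complete_lattice := CompleteLattice {
  cl_carrier :> Type;
  cl_le : cl_carrier -> cl_carrier -> Prop;
  cl_inf : (cl_carrier -> Prop) -> cl_carrier;
  cl_le_refl : forall x, cl_le x x;
  cl_le_trans : forall x y z, cl_le x y -> cl_le y z -> cl_le x z;
  cl_le_antisym : forall x y, cl_le x y -> cl_le y x -> x = y;
  cl_inf_lb : forall (S : cl_carrier -> Prop) x, S x -> cl_le (cl_inf S) x;
  cl_inf_glb : forall (S : cl_carrier -> Prop) y,
      (forall x, S x -> cl_le y x) -> cl_le y (cl_inf S)
}.

Definition cl_bot (L : complete_lattice) : L := cl_inf (fun _ : L => True).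
Definition cl_top (L : complete_lattice) : L := cl_inf (fun _ : L => False).

Definition infI (L : complete_lattice) (I : Type) (F : I -> L) : L :=
  cl_inf (fun y => exists i, y = F i).

Definition adjoint_triple (L : complete_lattice)
    (conj sw nw : L -> L -> L) : Prop :=
  forall x y z : L,
    (cl_le x (sw z y) <-> cl_le (conj x y) z) /\
    (cl_le (conj x y) z <-> cl_le y (nw z x)).

Definition has_zero_divisors (L : complete_lattice) (conj : L -> L -> L) :=
  exists x y : L, x <> cl_bot L /\ y <> cl_bot L /\ conj x y = cl_bot L.

Section Generic.
Variables (T : Type) (le : T -> T -> Prop) (M : T -> Prop).

Definition is_glb (S : T -> Prop) (c : T) : Prop :=
  M c /\ (forall x, S x -> le c x) /\
  (forall d, M d -> (forall x, S x -> le d x) -> le d c).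

Definition is_lub (S : T -> Prop) (c : T) : Prop :=
  M c /\ (forall x, S x -> le x c) /\
  (forall d, M d -> (forall x, S x -> le x d) -> le c d).

Definition pair_set (x y : T) : T -> Prop := fun z => z = x \/ z = y.

Definition sublattice (K : T -> Prop) : Prop :=
  (forall x, K x -> M x) /\
  (forall x y z, K x -> K y -> is_glb (pair_set x y) z -> K z) /\
  (forall x y z, K x -> K y -> is_lub (pair_set x y) z -> K z).

Variables (bot top : T).

Definition block (K : T -> Prop) : Prop :=
  sublattice K /\
  (exists x, M x /\ ~ K x) /\
  (exists k, K k /\ k <> bot /\ k <> top) /\
  (forall k, K k -> k <> bot -> k <> top ->
     forall x, M x -> (le k x \/ le x k) -> x <> bot -> x <> top -> K x).

Definition independent_blocks (K1 K2 : T -> Prop) : Prop :=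
  forall x, K1 x -> K2 x -> x = bot \/ x = top.

Definition decomposition_into_independent_blocks
    (I : Type) (K : I -> T -> Prop) : Prop :=
  (forall i, block (K i)) /\
  (forall i j, i <> j -> independent_blocks (K i) (K j)) /\
  (forall x, M x <-> exists i, K i x).

End Generic.

Section Contexts.
Variables (L : complete_lattice) (n : nat)
  (conj sw nw : 'I_n -> L -> L -> L)
  (A B : Type) (R : A -> B -> L) (sigma : A -> B -> 'I_n).

Definition normalized_context : Prop :=
  (forall a, (exists b1, R a b1 <> cl_bot L) /\ (exists b2, R a b2 = cl_bot L)) /\
  (forall b, (exists a1, R a1 b <> cl_bot L) /\ (exists a2, R a2 b = cl_bot L)).

Definition up (g : B -> L) : A -> L :=
  fun a => infI (fun b => sw (sigma a b) (R a b) (g b)).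

Definition down (f : A -> L) : B -> L :=
  fun b => infI (fun a => nw (sigma a b) (R a b) (f a)).

Definition concept_pair := ((B -> L) * (A -> L))%type.

Definition is_concept (p : concept_pair) : Prop :=
  up p.1 = p.2 /\ down p.2 = p.1.

Definition cle (p q : concept_pair) : Prop := forall b, cl_le (p.1 b) (q.1 b).

Definition top_concept : concept_pair :=
  (fun _ => cl_top L, fun _ => cl_bot L).
Definition bot_concept : concept_pair :=
  (fun _ => cl_bot L, fun _ => cl_top L).

Definition concept_ACC : Prop :=
  forall c : nat -> concept_pair, (forall k, is_concept (c k)) ->
    (forall k, cle (c k) (c k.+1)) ->
    exists N, forall k, N <= k -> c k = c N.

Definition is_phi (phi : A -> L) (a : A) (x : L) : Prop :=
  phi a = x /\ forall a', a' <> a -> phi a' = cl_bot L.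

Definition meet_irreducible (c : concept_pair) : Prop :=
  is_concept c /\ c <> top_concept /\
  forall d e, is_concept d -> is_concept e ->
    is_glb cle is_concept (pair_set d e) c -> c = d \/ c = e.

Definition M_F (A' : A -> Prop) (c : concept_pair) : Prop :=
  meet_irreducible c /\
  exists a x phi, A' a /\ is_phi phi a x /\ c = (down phi, up (down phi)).

Definition M_g (A' : A -> Prop) (p : concept_pair) (c : concept_pair) : Prop :=
  M_F A' c /\ cle p c.

Definition separable (Y : A -> Prop) (X : B -> Prop) : Prop :=
  (exists a, Y a) /\ (exists a, ~ Y a) /\
  (exists b, X b) /\ (exists b, ~ X b) /\
  (exists a b, Y a /\ X b /\ R a b <> cl_bot L) /\
  (forall a b, Y a -> ~ X b -> R a b = cl_bot L) /\
  (forall a b, ~ Y a -> X b -> R a b = cl_bot L).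

Definition decomposition_into_independent_subcontexts
    (Lambda : Type) (Al : Lambda -> A -> Prop) (Bl : Lambda -> B -> Prop) :
    Prop :=
  inhabited Lambda /\
  (forall l, separable (Al l) (Bl l)) /\
  (forall a, exists l, Al l a) /\
  (forall l m a, Al l a -> Al m a -> l = m) /\
  (forall b, exists l, Bl l b) /\
  (forall l m b, Bl l b -> Bl m b -> l = m) /\
  (forall l a b, ((~ Al l a /\ Bl l b) \/ (Al l a /\ ~ Bl l b)) ->
     ~ has_zero_divisors (conj (sigma a b))).

Definition K_block (A' : A -> Prop) (c : concept_pair) : Prop :=
  (is_concept c /\ is_glb cle is_concept (M_g A' c) c) \/
  c = top_concept \/ c = bot_concept.

End Contexts.

(* Main.v *)
Require Import Defs.
From mathcomp Require Import ssreflect ssrfun ssrbool eqtype ssrnat fintype.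
From Stdlib Require Import Classical ClassicalEpsilon FunctionalExtensionality.

Set Implicit Arguments.
Unset Strict Implicit.

Section Proof.
Variables (L : complete_lattice) (n : nat) (cj sw nw : 'I_n -> L -> L -> L).
Hypothesis Hadj : forall i, adjoint_triple (cj i) (sw i) (nw i).
Hypothesis Hunit : forall i (x : L), cj i x (cl_top L) = x /\ cj i (cl_top L) x = x.
Variables (A B : Type) (R : A -> B -> L) (sigma : A -> B -> 'I_n).
Hypothesis Hnorm : normalized_context R.

Local Notation le := (@cl_le L).
Local Notation bot := (cl_bot L).
Local Notation top := (cl_top L).
Local Notation up := (up sw R sigma).
Local Notation down := (down nw R sigma).
Local Notation concept := (is_concept sw nw R sigma).
Local Notation TC := (top_concept L A B).
Local Notation BC := (bot_concept L A B).
Local Notation cle := (@cle L A B).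

Lemma le_refl x : le x x. Proof. exact: cl_le_refl. Qed.
Lemma le_trans x y z : le x y -> le y z -> le x z. Proof. exact: cl_le_trans. Qed.
Lemma le_anti x y : le x y -> le y x -> x = y. Proof. exact: cl_le_antisym. Qed.
Lemma le_bot x : le bot x. Proof. by apply: cl_inf_lb. Qed.
Lemma le_top x : le x top. Proof. by apply: cl_inf_glb. Qed.
Lemma le_bot_eq x : le x bot -> x = bot. Proof. move=> h; apply: le_anti h (le_bot _). Qed.
Lemma infI_lb (I : Type) (F : I -> L) i : le (infI F) (F i).
Proof. by apply: cl_inf_lb; exists i. Qed.
Lemma infI_glb (I : Type) (F : I -> L) y : (forall i, le y (F i)) -> le y (infI F).
Proof. by move=> h; apply: cl_inf_glb => x [i ->]. Qed.

Lemma adj1 i x y z : le x (sw i z y) <-> le (cj i x y) z.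
Proof. exact: (proj1 (Hadj i x y z)). Qed.
Lemma adj2 i x y z : le (cj i x y) z <-> le y (nw i z x).
Proof. exact: (proj2 (Hadj i x y z)). Qed.
Lemma cj_bot_l i y : cj i bot y = bot.
Proof. apply: le_bot_eq; apply/adj1; exact: le_bot. Qed.
Lemma cj_bot_r i x : cj i x bot = bot.
Proof. apply: le_bot_eq; apply/adj2; exact: le_bot. Qed.
Lemma cj_mono_l i x x' y : le x x' -> le (cj i x y) (cj i x' y).
Proof. move=> h; apply/adj1; apply: le_trans h _; apply/adj1; exact: le_refl. Qed.

Definition rel (f : A -> L) (g : B -> L) :=
  forall a b, le (cj (sigma a b) (f a) (g b)) (R a b).

Lemma le_down f y b : le y (down f b) <-> forall a, le (cj (sigma a b) (f a) y) (R a b).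
Proof.
split.
- move=> h a; apply/adj2; apply: le_trans h _; exact: infI_lb.
- move=> h; apply: infI_glb => a; apply/adj2; exact: h.
Qed.
Lemma le_up g x a : le x (up g a) <-> forall b, le (cj (sigma a b) x (g b)) (R a b).
Proof.
split.
- move=> h b; apply/adj1; apply: le_trans h _; exact: infI_lb.
- move=> h; apply: infI_glb => b; apply/adj1; exact: h.
Qed.
Lemma rel_down f : rel f (down f).
Proof. move=> a b; move: (le_refl (down f b)); move/le_down; exact. Qed.
Lemma rel_up g : rel (up g) g.
Proof. move=> a b; move: (le_refl (up g a)); move/le_up; exact. Qed.

Lemma down_up_down f : down (up (down f)) = down f.
Proof.
apply: functional_extensionality => b; apply: le_anti.
- apply/le_down => a.
  have h1 : le (f a) (up (down f) a) by apply/le_up => b'; exact: rel_down.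
  apply: le_trans (cj_mono_l (sigma a b) (down (up (down f)) b) h1) _.
  exact: (rel_down (up (down f)) a b).
- apply/le_down => a; exact: rel_up.
Qed.

Lemma concept_down f : concept (down f, up (down f)).
Proof. split => //=; exact: down_up_down. Qed.

Lemma concept_eq c d : concept c -> concept d -> (forall b, c.1 b = d.1 b) -> c = d.
Proof.
case: c d => [g f] [g' f'] [h1 h2] [h3 h4] e; simpl in *.
have eg : g = g' by apply: functional_extensionality.
have ef : f = f' by rewrite -h1 -h3 eg.
by rewrite eg ef.
Qed.

Lemma up_top : up (fun _ => top) = fun _ => bot.
Proof.
apply: functional_extensionality => a; apply: le_bot_eq.
have [_ [b2 e]] := proj1 Hnorm a.
apply: le_trans (infI_lb _ b2) _; rewrite e.
have h := le_refl (sw (sigma a b2) bot top).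
move/adj1: h; by rewrite (proj1 (Hunit _ _)).
Qed.
Lemma down_bot : down (fun _ => bot) = fun _ => top.
Proof.
apply: functional_extensionality => b; apply: le_anti; first exact: le_top.
apply/le_down => a; rewrite cj_bot_l; exact: le_bot.
Qed.
Lemma up_bot : up (fun _ => bot) = fun _ => top.
Proof.
apply: functional_extensionality => a; apply: le_anti; first exact: le_top.
apply/le_up => b; rewrite cj_bot_r; exact: le_bot.
Qed.
Lemma down_top : down (fun _ => top) = fun _ => bot.
Proof.
apply: functional_extensionality => b; apply: le_bot_eq.
have [_ [a2 e]] := proj2 Hnorm b.
apply: le_trans (infI_lb _ a2) _; rewrite e.
have h := le_refl (nw (sigma a2 b) bot top).
move/adj2: h; by rewrite (proj2 (Hunit _ _)).
Qed.

Lemma concept_TC : concept TC.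
Proof. split; [exact: up_top | exact: down_bot]. Qed.
Lemma concept_BC : concept BC.
Proof. split; [exact: up_bot | exact: down_top]. Qed.

Lemma cle_top c : cle c TC.
Proof. move=> b; exact: le_top. Qed.
Lemma cle_bot c : cle BC c.
Proof. move=> b; exact: le_bot. Qed.
Lemma cle_trans c d e : cle c d -> cle d e -> cle c e.
Proof. move=> h1 h2 b; exact: le_trans (h1 b) (h2 b). Qed.
Lemma cle_refl c : cle c c.
Proof. move=> b; exact: le_refl. Qed.

Lemma top_cle c : concept c -> cle TC c -> c = TC.
Proof.
move=> hc h; apply: concept_eq => //; first exact: concept_TC.
move=> b; apply: le_anti; [exact: le_top | exact: h].
Qed.
Lemma cle_BC c : concept c -> cle c BC -> c = BC.
Proof.
move=> hc h; apply: concept_eq => //; first exact: concept_BC.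
move=> b; apply: le_bot_eq; exact: h.
Qed.
Lemma supp_of c : concept c -> c <> BC -> exists b, c.1 b <> bot.
Proof.
move=> hc hne; apply: NNPP => hn; apply: hne; apply: cle_BC => // b /=.
have: c.1 b = bot by apply: NNPP => h; apply: hn; exists b.
by move=> ->; apply: le_refl.
Qed.


Variables (Lambda : Type) (Al : Lambda -> A -> Prop) (Bl : Lambda -> B -> Prop).
Hypothesis Hdec : decomposition_into_independent_subcontexts cj R sigma Al Bl.

Lemma Asep l : separable R (Al l) (Bl l).
Proof. by case: Hdec => _ [h _]. Qed.
Lemma Aex a : exists l, Al l a.
Proof. by case: Hdec => _ [_ [h _]]. Qed.
Lemma Auniq l m a : Al l a -> Al m a -> l = m.
Proof. by case: Hdec => _ [_ [_ [h _]]]; apply: h. Qed.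
Lemma Bex b : exists l, Bl l b.
Proof. by case: Hdec => _ [_ [_ [_ [h _]]]]. Qed.
Lemma Buniq l m b : Bl l b -> Bl m b -> l = m.
Proof. by case: Hdec => _ [_ [_ [_ [_ [h _]]]]]; apply: h. Qed.
Lemma Roff1 l a b : Al l a -> ~ Bl l b -> R a b = bot.
Proof. by case: (Asep l) => _ [_ [_ [_ [_ [h _]]]]]; apply: h. Qed.
Lemma Roff2 l a b : ~ Al l a -> Bl l b -> R a b = bot.
Proof. by case: (Asep l) => _ [_ [_ [_ [_ [_ h]]]]]; apply: h. Qed.
Lemma nozd l a b x y : ((~ Al l a /\ Bl l b) \/ (Al l a /\ ~ Bl l b)) ->
  le (cj (sigma a b) x y) bot -> x = bot \/ y = bot.
Proof.
move=> hab hle; case: Hdec => _ [_ [_ [_ [_ [_ h]]]]].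
have hz := h l a b hab.
apply: NNPP => hn; apply: hz; exists x, y.
split; first by move=> e; apply: hn; left.
split; first by move=> e; apply: hn; right.
exact: le_bot_eq.
Qed.

Definition inC l (c : concept_pair L A B) :=
  concept c /\ c <> TC /\ exists b, Bl l b /\ c.1 b <> bot.

Lemma f_bot_off c l a b : concept c -> c.1 b <> bot -> Bl l b -> ~ Al l a -> c.2 a = bot.
Proof.
move=> [hu hd] hb hBl hAl.
have h1 : le (c.2 a) (sw (sigma a b) (R a b) (c.1 b)) by rewrite -hu; exact: infI_lb.
move/adj1: h1; rewrite (Roff2 hAl hBl) => h1.
by case: (nozd (l := l) (or_introl (conj hAl hBl)) h1).
Qed.

Lemma all_bot_TC c : concept c -> (forall a, c.2 a = bot) -> c = TC.
Proof.
move=> hc h; apply: top_cle => // b /=.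
have e : c.2 = fun _ => bot by apply: functional_extensionality.
case: hc => _ hd; rewrite -hd e down_bot; exact: le_refl.
Qed.

Lemma inC_supp l c b : inC l c -> c.1 b <> bot -> Bl l b.
Proof.
move=> [hc [hne [b1 [hb1 hc1]]]] hcb.
have [m hm] := Bex b.
case: (classic (m = l)) => [<- //|hml].
exfalso; apply: hne; apply: all_bot_TC => // a.
have [nu hnu] := Aex a.
case: (classic (nu = l)) => [enu|hnl].
- subst nu; apply: (f_bot_off (l := m) hc hcb hm) => ham.
  by apply: hml; apply: Auniq ham hnu.
- apply: (f_bot_off (l := l) hc hc1 hb1) => hal.
  by apply: hnl; apply: Auniq hnu hal.
Qed.

Lemma inC_uniq l m c : inC l c -> inC m c -> l = m.
Proof.
move=> hl hm; case: (hl) => _ [_ [b [hb hcb]]].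
exact: Buniq hb (inC_supp hm hcb).
Qed.

Lemma inC_ne_bot l c : inC l c -> c <> BC.
Proof. by move=> [_ [_ [b [_ hb]]]] e; apply: hb; rewrite e. Qed.

Lemma le_ne_bot x y : le x y -> x <> bot -> y <> bot.
Proof. by move=> h hx e; apply: hx; apply: le_bot_eq; rewrite -e. Qed.

Lemma inC_conv l x z : inC l x -> concept z -> z <> TC -> z <> BC ->
  (cle z x \/ cle x z) -> inC l z.
Proof.
move=> hx hz hzt hzb hcmp; split => //; split => //.
case: hcmp => h.
- have [b hb] := supp_of hz hzb.
  exists b; split => //; apply: (inC_supp hx); exact: le_ne_bot (h b) hb.
- case: hx => _ [_ [b [hb hxb]]]; exists b; split => //; exact: le_ne_bot (h b) hxb.
Qed.

Lemma nontriv_inC c : concept c -> c <> TC -> c <> BC -> exists l, inC l c.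
Proof.
move=> hc ht hb; have [b hcb] := supp_of hc hb.
have [l hl] := Bex b; exists l; split => //; split => //; exists b; done.
Qed.

Lemma phi_supp l phi a x b : is_phi phi a x -> Al l a ->
  ((down phi, up (down phi)) : concept_pair L A B) <> TC ->
  down phi b <> bot -> Bl l b.
Proof.
move=> [hpa hpo] hal hne hb.
case: (classic (x = bot)) => [ex|hx].
- exfalso; apply: hne.
  have ephi : phi = fun _ => bot.
    apply: functional_extensionality => a'.
    case: (classic (a' = a)) => [->|h]; [by rewrite hpa ex | exact: hpo].
  by rewrite ephi down_bot up_top.
- apply: NNPP => hnb.
  have h1 : le (down phi b) (nw (sigma a b) (R a b) (phi a)) by exact: infI_lb.
  move/adj2: h1; rewrite (Roff1 hal hnb) hpa => h1.
  by case: (nozd (l := l) (or_intror (conj hal hnb)) h1).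
Qed.

Definition phiF (a : A) (x : L) : A -> L :=
  fun a' => if excluded_middle_informative (a' = a) then x else bot.

Lemma phiF_is a x : is_phi (phiF a x) a x.
Proof.
rewrite /phiF; split.
- by case: excluded_middle_informative.
- by move=> a' h; case: excluded_middle_informative.
Qed.

Lemma exists_inC l : exists c, inC l c.
Proof.
have [[a hal] _] := Asep l.
have [[b1 hb1] [b2 hb2]] := proj1 Hnorm a.
pose c : concept_pair L A B := (down (phiF a top), up (down (phiF a top))).
have hc : concept c by exact: concept_down.
have h1 : le (R a b1) (c.1 b1).
  apply/le_down => a'; rewrite /phiF; destruct (excluded_middle_informative (a' = a)) as [e|ne]; simpl.
  - subst a'; rewrite (proj2 (Hunit _ _)); exact: le_refl.
  - rewrite cj_bot_l; exact: le_bot.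
have h2 : c.1 b2 = bot.
  apply: le_bot_eq; apply: le_trans (infI_lb _ a) _.
  rewrite hb2 /phiF; destruct (excluded_middle_informative (a = a)) as [e|ne]; simpl; last by [].
  have h := le_refl (nw (sigma a b2) bot top).
  by move/adj2: h; rewrite (proj2 (Hunit _ _)).
exists c; split => //; split.
- move=> e; apply: hb1; apply: le_bot_eq; apply: le_trans h1 _.
  rewrite -h2 e; exact: le_refl.
- exists b1; split; last exact: le_ne_bot h1 hb1.
  apply: NNPP => hn; apply: hb1; exact: Roff1 hal hn.
Qed.

Hypothesis HACC : concept_ACC sw nw R sigma.

Lemma acc_ind (P : concept_pair L A B -> Prop) :
  (forall c, concept c -> (forall e, concept e -> cle c e -> e <> c -> P e) -> P c) ->
  forall c, concept c -> P c.
Proof.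
move=> H c0 hc0; apply: NNPP => hn0.
pose Q c := concept c /\ ~ P c.
have step : forall c : {c | Q c}, exists e : {e | Q e},
    cle (proj1_sig c) (proj1_sig e) /\ proj1_sig e <> proj1_sig c.
  move=> [c [hc hnc]] /=; apply: NNPP => hn; apply: hnc; apply: H => // e he hce hne.
  apply: NNPP => hpe; apply: hn; by exists (exist _ e (conj he hpe)).
pose next (c : {c | Q c}) := proj1_sig (constructive_indefinite_description _ (step c)).
have hnext c : cle (proj1_sig c) (proj1_sig (next c)) /\ proj1_sig (next c) <> proj1_sig c
  := proj2_sig (constructive_indefinite_description _ (step c)).
pose s k := proj1_sig (iter k next (exist _ c0 (conj hc0 hn0))).
have hs1 : forall k, concept (s k).
  move=> k; exact: (proj1 (proj2_sig (iter k next _))).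
have hs2 : forall k, cle (s k) (s k.+1).
  move=> k; rewrite /s iterS; exact: (proj1 (hnext _)).
have [N hN] := @HACC s hs1 hs2.
have := hN N.+1 (leqnSn N); rewrite /s iterS; exact: (proj2 (hnext _)).
Qed.

Local Notation MgT := (M_g sw nw R sigma (fun _ => True)).

Lemma glb_thm : forall c, concept c -> forall d, concept d ->
  (forall m, MgT c m -> cle d m) -> cle d c.
Proof.
apply: (acc_ind (P := fun c => forall d, concept d ->
  (forall m, MgT c m -> cle d m) -> cle d c)).
move=> c hc IH d hd hlb.
have sub : forall e m, cle c e -> MgT e m -> MgT c m.
  move=> e m hce [hF hem]; split => //; exact: cle_trans hce hem.
case: (classic (MgT c c)) => [hS|hnS]; first exact: hlb.
case: (classic (c = TC)) => [->|hnt]; first exact: cle_top.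
case: (classic (forall d' e, concept d' -> concept e ->
   is_glb cle concept (pair_set d' e) c -> c = d' \/ c = e)) => [hmi|hnmi].
- have hmi' : meet_irreducible sw nw R sigma c by split => //; split.
  move=> b.
  have hcb : c.1 b = down c.2 b by case: hc => _ ->.
  rewrite hcb; apply: infI_glb => a.
  pose e : concept_pair L A B := (down (phiF a (c.2 a)), up (down (phiF a (c.2 a)))).
  have he : concept e by exact: concept_down.
  have hce : cle c e.
    move=> b' /=; rewrite [c.1 b'](_ : _ = down c.2 b'); last by case: hc => _ ->.
    apply/le_down => a'; rewrite /phiF.
    destruct (excluded_middle_informative (a' = a)) as [ea|na]; simpl.
    + subst a'; exact: rel_down.
    + rewrite cj_bot_l; exact: le_bot.
  have hne : e <> c.
    move=> ec; apply: hnS; split; last exact: cle_refl.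
    split; first exact: hmi'.
    exists a, (c.2 a), (phiF a (c.2 a)); split => //; split; first exact: phiF_is.
    exact: (esym ec).
  have hde := IH e he hce hne d hd (fun m hm => hlb m (sub e m hce hm)).
  apply: le_trans (hde b) _.
  apply: le_trans (infI_lb _ a) _.
  rewrite /phiF; destruct (excluded_middle_informative (a = a)) as [ea|na]; simpl;
    [exact: le_refl | by []].
- have [d' [e [hd' [he [hg [h1 h2]]]]]] : exists d' e, concept d' /\ concept e /\
      is_glb cle concept (pair_set d' e) c /\ c <> d' /\ c <> e.
    apply: NNPP => hn; apply: hnmi => d' e hd' he hg; apply: NNPP => hn2; apply: hn.
    exists d', e; do 3 (split => //); split.
    + by move=> x; apply: hn2; left.
    + by move=> x; apply: hn2; right.
  case: hg => _ [hlbg hgr].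
  have hcd : cle c d' by apply: hlbg; left.
  have hce : cle c e by apply: hlbg; right.
  have k1 := IH d' hd' hcd (fun x => h1 (esym x)) d hd (fun m hm => hlb m (sub _ m hcd hm)).
  have k2 := IH e he hce (fun x => h2 (esym x)) d hd (fun m hm => hlb m (sub _ m hce hm)).
  by apply: hgr => // x [->|->].
Qed.

Lemma K_inv l c : K_block sw nw R sigma (Al l) c -> c = TC \/ c = BC \/ inC l c.
Proof.
case=> [[hc [_ [hlb hgr]]]|[->|->]]; [|by left|by right; left].
case: (classic (c = TC)) => [->|ht]; first by left.
case: (classic (c = BC)) => [->|hb]; first by right; left.
right; right; split => //; split => //.
have [b hcb] := supp_of hc hb.
case: (classic (exists m, M_g sw nw R sigma (Al l) c m)) =>
  [[m [[[hm [hmt _]] [a [x [phi [hal [hphi em]]]]]] hcm]]|hn].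
- exists b; split => //; subst m; apply: (phi_supp hphi hal hmt).
  exact: le_ne_bot (hcm b) hcb.
- exfalso; apply: ht; apply: top_cle => //; apply: hgr; first exact: concept_TC.
  move=> m hm; exfalso; apply: hn; by exists m.
Qed.

Lemma K_of_inC l c : inC l c -> K_block sw nw R sigma (Al l) c.
Proof.
move=> hin; left; case: (hin) => hc [ht [b0 [hb0 hcb0]]].
split => //; split => //; split; first by move=> m [].
move=> d hd hlb; apply: glb_thm => // m [[hm [a [x [phi [_ [hphi em]]]]]] hcm].
apply: hlb; split; last exact: hcm.
split; first exact: hm.
have [mu hmu] := Aex a.
have hmt := proj1 (proj2 hm).
have hcm' := hcm.
rewrite em in hmt hcm'.
have hBmu : Bl mu b0.
  apply: (phi_supp hphi hmu hmt); exact: le_ne_bot (hcm' b0) hcb0.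
have eml : mu = l := Buniq hBmu hb0.
subst mu; by exists a, x, phi.
Qed.


Lemma main : decomposition_into_independent_blocks cle concept BC TC
  (fun l => K_block sw nw R sigma (Al l)).
Proof.
have KM : forall l x, K_block sw nw R sigma (Al l) x -> concept x.
  move=> l x [[hx _]|[->|->]]; [done|exact: concept_TC|exact: concept_BC].
split; last split.
- move=> l.
  split; [split; [exact: KM l | split] | split; [|split]].
  + move=> x y z hx hy hg.
    case: hg => hz [hlb hgr].
    case: (classic (z = TC)) => [->|ht]; first by right; left.
    case: (classic (z = BC)) => [->|hb]; first by right; right.
    apply: K_of_inC.
    have hzx : cle z x by apply: hlb; left.
    have hzy : cle z y by apply: hlb; right.
    case: (K_inv hx) => [ex|[ex|hix]]; last exact: inC_conv hix hz ht hb (or_introl hzx);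
    case: (K_inv hy) => [ey|[ey|hiy]]; try exact: inC_conv hiy hz ht hb (or_introl hzy).
    * exfalso; apply: ht; apply: top_cle hz _; apply: hgr; first exact: concept_TC.
      move=> w [->|->]; [rewrite ex|rewrite ey]; exact: cle_refl.
    * exfalso; apply: hb; apply: cle_BC hz _; rewrite -ey; exact: hzy.
    * exfalso; apply: hb; apply: cle_BC hz _; rewrite -ex; exact: hzx.
    * exfalso; apply: hb; apply: cle_BC hz _; rewrite -ex; exact: hzx.
  + move=> x y z hx hy hg.
    case: hg => hz [hub hgr].
    case: (classic (z = TC)) => [->|ht]; first by right; left.
    case: (classic (z = BC)) => [->|hb]; first by right; right.
    apply: K_of_inC.
    have hxz : cle x z by apply: hub; left.
    have hyz : cle y z by apply: hub; right.
    case: (K_inv hx) => [ex|[ex|hix]]; last exact: inC_conv hix hz ht hb (or_intror hxz);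
    case: (K_inv hy) => [ey|[ey|hiy]]; try exact: inC_conv hiy hz ht hb (or_intror hyz).
    * exfalso; apply: ht; apply: top_cle hz _; rewrite -ex; exact: hxz.
    * exfalso; apply: ht; apply: top_cle hz _; rewrite -ex; exact: hxz.
    * exfalso; apply: ht; apply: top_cle hz _; rewrite -ey; exact: hyz.
    * exfalso; apply: hb; apply: cle_BC hz _; apply: hgr; first exact: concept_BC.
      move=> w [->|->]; [rewrite ex|rewrite ey]; exact: cle_refl.
  + have [_ [[a' hna] _]] := Asep l.
    have [mu hmu] := Aex a'.
    have hml : mu <> l by move=> e; subst mu.
    have [c hc] := exists_inC mu.
    exists c; split; first exact: (proj1 hc).
    move=> hK; case: (K_inv hK) => [e|[e|hcl]].
    * exact: (proj1 (proj2 hc)) e.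
    * exact: inC_ne_bot hc e.
    * exact: hml (inC_uniq hc hcl).
  + have [c hc] := exists_inC l.
    exists c; split; first exact: K_of_inC hc.
    split; [exact: inC_ne_bot hc | exact: (proj1 (proj2 hc))].
  + move=> k hk hkb hkt x hx hcmp hxb hxt.
    apply: K_of_inC.
    case: (K_inv hk) => [e|[e|hik]]; [by [] | by [] |].
    apply: inC_conv hik hx hxt hxb _.
    by case: hcmp => h; [right|left].
- move=> i j hij x hi hj.
  case: (K_inv hi) => [e|[e|hix]]; [by right | by left |].
  case: (K_inv hj) => [e|[e|hjx]]; [by right | by left |].
  exfalso; exact: hij (inC_uniq hix hjx).
- move=> x; split; last by move=> [i hi]; exact: KM hi.
  move=> hx.
  have [[l0] _] := Hdec.
  case: (classic (x = TC)) => [->|ht]; first by exists l0; right; left.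
  case: (classic (x = BC)) => [->|hb]; first by exists l0; right; right.
  have [l hl] := nontriv_inC hx ht hb.
  by exists l; apply: K_of_inC.
Qed.

End Proof.

Theorem theorem32
  (L : complete_lattice) (n : nat)
  (conj sw nw : 'I_n -> L -> L -> L)
  (Hadj : forall i, adjoint_triple (conj i) (sw i) (nw i))
  (Hunit : forall i (x : L), conj i x (cl_top L) = x /\ conj i (cl_top L) x = x)
  (A B : Type) (R : A -> B -> L) (sigma : A -> B -> 'I_n)
  (HA : inhabited A) (HB : inhabited B)
  (Hnorm : normalized_context R)
  (HACC : concept_ACC sw nw R sigma)
  (Lambda : Type) (Al : Lambda -> A -> Prop) (Bl : Lambda -> B -> Prop)
  (Hdec : decomposition_into_independent_subcontexts conj R sigma Al Bl) :
  decomposition_into_independent_blocks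
    (cle (L := L) (A := A) (B := B)) (is_concept sw nw R sigma)
    (bot_concept L A B) (top_concept L A B)
    (fun l => K_block sw nw R sigma (Al l)).
Proof.
exact: (main Hadj Hunit Hnorm Hdec HACC).
Qed.
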